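(* Let $A_1,\dots,A_k,A$ be formulas of $\mathcal{L}_\infty$ and $m_1,\dots,m_k,n$ natural numbers such that $\Box_{m_i}A_i$ ($1\le i\le k$) and $\Box_nA$ are formulas of $\mathcal{L}_\infty$. (i) If $\bigwedge_{i=1}^k\Box_{m_i}A_i\vdash_{\mathbf{K4}_h}A$ and $m_i\le n$ for all $i$, then $\bigwedge_{i=1}^k\Box_{m_i}A_i\vdash_{\mathbf{K4}_h}\Box_nA$. (ii) If $\bigwedge_{i=1}^k\Box_{m_i}A_i\vdash_{\mathbf{S4}_h}A$ and $m_i\le n$ for all $i$, then $\bigwedge_{i=1}^k\Box_{m_i}A_i\vdash_{\mathbf{S4}_h}\Box_nA$.
   Context: The language $\mathcal{L}_\infty$ consists of modal formulas built from propositional atoms, $\bot,\top$, the connectives $\neg,\wedge,\vee,\rightarrow$ and unary modalities $\Box_n$ ($n\in\mathbb{N}$), with the restriction that $\Box_n A$ is a formula only if $n$ is strictly greater than the index of every box occurring in $A$. All formulas are in $\mathcal{L}_\infty$; axiom instances are only those that are $\mathcal{L}_\infty$-formulas. Axiom schemes (for all $n\ge0$): $\mathbf{H}$: $\Box_n A\rightarrow\Box_{n+1}A$; $\mathbf{K}_h$: $\Box_n(A\rightarrow B)\rightarrow(\Box_nA\rightarrow\Box_nB)$; $\mathbf{4}_h$: $\Box_nA\rightarrow\Box_{n+1}\Box_nA$; $\mathbf{T}_h$: $\Box_nA\rightarrow A$. For a set $X$ of schemes, $L(X)$ is the least set of $\mathcal{L}_\infty$-formulas containing all classical propositional tautologies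 and all instances of the schemes in $X$, closed under modus ponens and the rule: from $A$ infer $\Box_nA$ for any $n$ greater than all box indices in $A$. $\mathbf{K4}_h=L(\mathbf{H},\mathbf{K}_h,\mathbf{4}_h)$, $\mathbf{S4}_h=L(\mathbf{H},\mathbf{K}_h,\mathbf{4}_h,\mathbf{T}_h)$. For a set $\Gamma$ of formulas, $\Gamma\vdash_{L}A$ means there is a finite $\Delta\subseteq\Gamma$ with $\bigwedge\Delta\rightarrow A\in L$. *)

(* Defs.v *)
From Stdlib Require Import List Arith.
Import ListNotations.

(* Raw modal formulas; well-formedness (the L_infinity restriction) is a separate predicate. *)
Inductive form : Type :=
| Var : nat -> form
| Bot : form
| Top : form
| Neg : form -> form
| And : form -> form -> form
| Or  : form -> form -> form
| Imp : form -> form -> form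
| Box : nat -> form -> form.

Fixpoint boxes_below (n : nat) (A : form) : Prop :=
  match A with
  | Var _ | Bot | Top => True
  | Neg B => boxes_below n B
  | And B C | Or B C | Imp B C => boxes_below n B /\ boxes_below n C
  | Box m B => m < n /\ boxes_below n B
  end.

Fixpoint wf (A : form) : Prop :=
  match A with
  | Var _ | Bot | Top => True
  | Neg B => wf B
  | And B C | Or B C | Imp B C => wf B /\ wf C
  | Box n B => boxes_below n B /\ wf B
  end.

(* Classical valuation: atoms and boxed formulas are treated as propositional letters *)
Fixpoint eval (v : form -> bool) (A : form) : bool :=
  match A with
  | Var p => v (Var p)
  | Bot => false
  | Top => true
  | Neg B => negb (eval v B)
  | And B C => andb (eval v B) (eval v C)
  | Or B C => orb (eval v B) (eval v C)
  | Imp B C => implb (eval v B) (eval v C)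
  | Box n B => v (Box n B)
  end.

Definition tautology (A : form) : Prop := forall v : form -> bool, eval v A = true.

Inductive scheme : Type := SH | SK | S4 | ST.

Definition instance (s : scheme) (F : form) : Prop :=
  match s with
  | SH => exists n A, F = Imp (Box n A) (Box (S n) A)
  | SK => exists n A B, F = Imp (Box n (Imp A B)) (Imp (Box n A) (Box n B))
  | S4 => exists n A, F = Imp (Box n A) (Box (S n) (Box n A))
  | ST => exists n A, F = Imp (Box n A) A
  end.

Inductive L (X : scheme -> Prop) : form -> Prop :=
| L_taut : forall A, wf A -> tautology A -> L X A
| L_ax : forall s A, X s -> wf A -> instance s A -> L X A
| L_mp : forall A B, L X A -> L X (Imp A B) -> L X B
| L_nec : forall n A, L X A -> boxes_below n A -> L X (Box n A).

Definition K4h_schemes (s : scheme) : Prop := s = SH \/ s = SK \/ s = S4.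
Definition S4h_schemes (s : scheme) : Prop := s = SH \/ s = SK \/ s = S4 \/ s = ST.

Definition K4h : form -> Prop := L K4h_schemes.
Definition S4h : form -> Prop := L S4h_schemes.

Fixpoint bigand (D : list form) : form :=
  match D with
  | [] => Top
  | B :: D' => And B (bigand D')
  end.

Definition derives (Lg : form -> Prop) (Gamma : form -> Prop) (A : form) : Prop :=
  exists D : list form, (forall B, In B D -> Gamma B) /\ Lg (Imp (bigand D) A).

Definition boxed_premises (ps : list (nat * form)) : form -> Prop :=
  fun B => In B (map (fun p => Box (fst p) (snd p)) ps).

(* Main.v *)
Require Import Defs.
From Stdlib Require Import List Arith Lia.
Import ListNotations.

Ltac tauto_eval := let v := fresh "v" in intro v; simpl;
  repeat match goal with |- context [?f ?X] =>
    match type of f with form -> bool => destruct (f X) end end; reflexivity.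

Fixpoint tr (b : bool) (n : nat) (A : form) : form :=
  match A with
  | Var p => Var p | Bot => Bot | Top => Top
  | Neg B => Neg (tr b n B)
  | And B C => And (tr b n B) (tr b n C)
  | Or B C => Or (tr b n B) (tr b n C)
  | Imp B C => Imp (tr b n B) (tr b n C)
  | Box k B => if Nat.leb n k then (if b then tr b n B else Top) else Box k B
  end.

Lemma bb_mono : forall A m n, m <= n -> boxes_below m A -> boxes_below n A.
Proof. induction A; simpl; intuition eauto; lia. Qed.

Lemma tr_id : forall b n A, boxes_below n A -> tr b n A = A.
Proof.
  induction A; simpl; intros; intuition;
  try congruence.
  match goal with |- context [Nat.leb ?a ?c] => destruct (Nat.leb_spec a c); [lia|auto] end.
Qed.

Lemma wf_tr : forall b n A, wf A -> wf (tr b n A).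
Proof.
  induction A; simpl; intuition.
  match goal with |- context [Nat.leb ?a ?c] => destruct (Nat.leb_spec a c) end;
  [destruct b; simpl; auto|simpl; auto].
Qed.

Lemma eval_tr : forall b n v A,
  eval v (tr b n A) = eval (fun X => eval v (tr b n X)) A.
Proof.
  induction A; simpl; try rewrite IHA; try rewrite IHA1; try rewrite IHA2; auto.
Qed.

Section Log.
Variable X : scheme -> Prop.

Lemma wfL : forall A, L X A -> wf A.
Proof. induction 1; simpl in *; intuition. Qed.

Lemma taut1 : forall P Q, L X P -> wf Q -> tautology (Imp P Q) -> L X Q.
Proof.
  intros. eapply L_mp; [eassumption|]. apply L_taut; auto. simpl; split; auto using wfL.
Qed.

Lemma taut2 : forall P1 P2 Q, L X P1 -> L X P2 -> wf Q ->
  tautology (Imp P1 (Imp P2 Q)) -> L X Q.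
Proof.
  intros. eapply L_mp; [exact H0|]. eapply L_mp; [exact H|].
  apply L_taut; auto. simpl; pose proof (wfL _ H); pose proof (wfL _ H0); tauto.
Qed.

Lemma taut3 : forall P1 P2 P3 Q, L X P1 -> L X P2 -> L X P3 -> wf Q ->
  tautology (Imp P1 (Imp P2 (Imp P3 Q))) -> L X Q.
Proof.
  intros. eapply L_mp; [exact H1|]. eapply L_mp; [exact H0|]. eapply L_mp; [exact H|].
  apply L_taut; auto. simpl; pose proof (wfL _ H); pose proof (wfL _ H0);
  pose proof (wfL _ H1); tauto.
Qed.

Lemma imp_trans : forall A B C, L X (Imp A B) -> L X (Imp B C) -> L X (Imp A C).
Proof.
  intros. pose proof (wfL _ H); pose proof (wfL _ H0); simpl in *.
  apply (taut2 _ _ _ H H0); simpl; [tauto|tauto_eval].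
Qed.

Hypothesis XH : X SH.
Hypothesis XK : X SK.
Hypothesis X4 : X S4.

Lemma Kax : forall k A B, wf (Box k (Imp A B)) ->
  L X (Imp (Box k (Imp A B)) (Imp (Box k A) (Box k B))).
Proof.
  intros. apply L_ax with SK; auto. simpl in *; tauto.
  simpl; eauto.
Qed.

Lemma box_mono : forall k A B, L X (Imp A B) -> boxes_below k (Imp A B) ->
  L X (Imp (Box k A) (Box k B)).
Proof.
  intros. eapply L_mp; [apply L_nec; eauto|]. apply Kax.
  pose proof (wfL _ H). simpl in *; tauto.
Qed.

Lemma box_and : forall k A B, wf (Box k A) -> wf (Box k B) ->
  L X (Imp (And (Box k A) (Box k B)) (Box k (And A B))).
Proof.
  intros. simpl in *.
  assert (T: L X (Imp A (Imp B (And A B)))) by (apply L_taut; [simpl; tauto|tauto_eval]).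
  assert (N := L_nec _ k _ T ltac:(simpl; tauto)).
  assert (K1 := Kax k A (Imp B (And A B)) ltac:(simpl; tauto)).
  assert (K2 := Kax k B (And A B) ltac:(simpl; tauto)).
  apply (taut3 _ _ _ _ N K1 K2); [simpl; tauto|tauto_eval].
Qed.

Lemma H_chain : forall d j Y, wf (Box j Y) -> L X (Imp (Box j Y) (Box (j + d) Y)).
Proof.
  induction d; intros.
  - rewrite Nat.add_0_r. apply L_taut; [simpl in *; tauto|tauto_eval].
  - eapply imp_trans; [apply IHd; auto|]. rewrite <- plus_n_Sm.
    apply L_ax with SH; auto.
    + simpl in *. destruct H as [H1 H2].
      assert (boxes_below (j+d) Y) by (apply (bb_mono Y j); [lia|auto]).
      assert (boxes_below (S (j+d)) Y) by (apply (bb_mono Y j); [lia|auto]).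
      tauto.
    + simpl; eauto.
Qed.

Variable b : bool.
Hypothesis Hb1 : b = true -> X ST.
Hypothesis Hb2 : X ST -> b = true.
Variable n : nat.

Lemma tr_pres : forall A, L X A -> L X (tr b n A).
Proof.
  induction 1.
  - apply L_taut; [now apply wf_tr|]. intro v; rewrite eval_tr; apply H0.
  - destruct s; simpl in H1.
    + destruct H1 as (k & B & ->). simpl in H0. simpl.
      destruct (Nat.leb_spec n k); destruct (Nat.leb_spec n (S k)); try lia.
      * destruct b; apply L_taut; try tauto_eval; simpl; intuition auto using wf_tr.
      * destruct b eqn:E.
        -- rewrite tr_id by (apply (bb_mono B k); [lia|tauto]). apply L_ax with ST; auto.
           simpl; intuition. simpl; eauto.
        -- apply L_taut; [simpl; tauto|tauto_eval].
      * apply L_ax with SH; [auto|simpl in *; intuition|simpl; eauto].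
    + destruct H1 as (k & B & C & ->). simpl in H0 |- *.
      destruct (Nat.leb_spec n k).
      * destruct b; apply L_taut; try tauto_eval; simpl; intuition auto using wf_tr.
      * apply L_ax with SK; [auto|simpl in *; intuition|simpl; eauto].
    + destruct H1 as (k & B & ->). simpl in H0 |- *.
      destruct (Nat.leb_spec n k); destruct (Nat.leb_spec n (S k)); try lia.
      * destruct b; apply L_taut; try tauto_eval; simpl; intuition auto using wf_tr.
      * destruct b; apply L_taut; try tauto_eval; simpl; intuition auto using wf_tr.
      * apply L_ax with S4; [auto|simpl in *; intuition|simpl; eauto].
    + destruct H1 as (k & B & ->). simpl in H0 |- *.
      rewrite (Hb2 H).
      destruct (Nat.leb_spec n k).
      * apply L_taut; [simpl; intuition auto using wf_tr|tauto_eval].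
      * rewrite tr_id by (apply (bb_mono B k); [lia|tauto]).
        apply L_ax with ST; [auto|simpl in *; intuition|simpl; eauto].
  - simpl in IHL2. exact (L_mp _ _ _ IHL1 IHL2).
  - simpl. destruct (Nat.leb_spec n n0).
    + destruct b; auto. apply L_taut; [simpl; auto|tauto_eval].
    + apply L_nec; auto.
Qed.

Lemma tr_bigand : forall D, tr b n (bigand D) = bigand (map (tr b n) D).
Proof. induction D; simpl; f_equal; auto. Qed.

Lemma premise : forall m C, m <= n -> wf (Box m C) ->
  L X (Imp (Box m C) (Box n (tr b n (Box m C)))).
Proof.
  intros m C Hm Hw. simpl in Hw. simpl.
  destruct (Nat.leb_spec n m).
  - assert (m = n) by lia. subst m. destruct b.
    + rewrite tr_id by tauto. apply L_taut; [simpl; tauto|tauto_eval].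
    + assert (L X (Box n Top)) by (apply L_nec; [apply L_taut; [simpl; auto|tauto_eval]|simpl; auto]).
      apply (taut1 _ _ H0); [simpl; tauto|tauto_eval].
  - apply imp_trans with (Box (S m) (Box m C)).
    + apply L_ax with S4; [auto|simpl; intuition; apply (bb_mono C m); auto|simpl; eauto].
    + assert (HC := H_chain (n - S m) (S m) (Box m C)).
      replace (S m + (n - S m)) with n in HC by lia. apply HC.
      simpl; intuition. apply (bb_mono C m); auto.
Qed.

Lemma conj_lemma : forall D, (forall B, In B D -> L X (Imp B (Box n (tr b n B)))) ->
  L X (Imp (bigand D) (Box n (bigand (map (tr b n) D)))).
Proof.
  induction D; simpl; intros.
  - assert (L X (Box n Top)) by (apply L_nec; [apply L_taut; [simpl; auto|tauto_eval]|simpl; auto]).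
    apply (taut1 _ _ H0); [simpl; auto|tauto_eval].
  - assert (h1 := H a (or_introl eq_refl)).
    assert (h2 := IHD (fun B HB => H B (or_intror HB))).
    pose proof (wfL _ h1) as w1; pose proof (wfL _ h2) as w2.
    assert (h3 := box_and n (tr b n a) (bigand (map (tr b n) D))
                   ltac:(simpl in *; tauto) ltac:(simpl in *; tauto)).
    apply (taut3 _ _ _ _ h1 h2 h3); [simpl in *; tauto|tauto_eval].
Qed.

Lemma main : forall ps A, (forall p, In p ps -> wf (Box (fst p) (snd p))) ->
  wf (Box n A) -> (forall p, In p ps -> fst p <= n) ->
  derives (L X) (boxed_premises ps) A -> derives (L X) (boxed_premises ps) (Box n A).
Proof.
  intros ps A Hw HA Hle [D [HD HL]]. exists D. split; auto.
  assert (Hprem : forall B, In B D -> exists m C, B = Box m C /\ m <= n /\ wf (Box m C)).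
  { intros B HB. apply HD in HB. unfold boxed_premises in HB.
    apply in_map_iff in HB. destruct HB as [[m C] [<- Hin]].
    exists m, C. split; auto. split; [apply (Hle _ Hin)|apply (Hw _ Hin)]. }
  simpl in HA.
  assert (T := tr_pres _ HL). simpl in T. rewrite tr_bigand, tr_id in T by tauto.
  eapply imp_trans.
  - apply conj_lemma. intros B HB. destruct (Hprem B HB) as (m & C & -> & H1 & H2).
    now apply premise.
  - apply box_mono; auto. simpl. split; [|tauto].
    clear T HL HD. induction D as [|B D IH]; simpl; auto. split.
    + destruct (Hprem B (or_introl eq_refl)) as (m & C & -> & H1 & H2). simpl in H2 |- *.
      destruct (Nat.leb_spec n m).
      * assert (m = n) by lia; subst m.
        destruct b; simpl; auto. rewrite tr_id by tauto. tauto.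
      * simpl. split; [lia|]. apply (bb_mono C m); [lia|tauto].
    + apply IH. intros; apply Hprem; simpl; auto.
Qed.

End Log.

Theorem theorem3p9 (ps : list (nat * form)) (A : form) (n : nat) :
  (forall p, In p ps -> wf (Box (fst p) (snd p))) ->
  wf (Box n A) ->
  (forall p, In p ps -> fst p <= n) ->
  (derives K4h (boxed_premises ps) A -> derives K4h (boxed_premises ps) (Box n A)) /\
  (derives S4h (boxed_premises ps) A -> derives S4h (boxed_premises ps) (Box n A)).
Proof.
  intros. split.
  - apply (main K4h_schemes) with (b := false); unfold K4h_schemes; auto;
      try discriminate; intros [?|[?|?]]; discriminate.
  - apply (main S4h_schemes) with (b := true); unfold S4h_schemes; auto.
Qed.
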